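(* Let $G$ be a gradual mechanism implementing an SCF $f$. Then $G$ is incentive compatible if and only if for every agent $i\in N$ and all type profiles $\theta^1,\theta^2\in\Theta$ that are both consistent with a common strategy profile $s_{-i}\in S_{-i}$, we have $f(\theta^1)\,R(\theta^1_i)\,f(\theta^2)$.
   Context: Setting. $N$ is a finite set of agents and $X$ a finite set of outcomes. Each agent $i\in N$ has a finite type space $\Theta_i$; each type $\theta_i$ determines a complete and transitive preference $R(\theta_i)$ on $X$. $\Theta=\prod_{i\in N}\Theta_i$. An SCF is a map $f:\Theta\to X$. Dynamic game forms. A dynamic game form with perfect recall consists of a finite tree $\bar H$ of histories (finite sequences of action profiles) containing the empty initial history $\varnothing$, closed under prefixes ($\preceq$ prefix order); terminal histories $Z$, non-terminal $H$; at each $h\in H$ a nonempty set $\mathbb P(h)$ of agents move simultaneously with available actions $A_i(h)$, all action profiles leading to successors; $\mathbb P(\varnothing)=N$; each agent's set $H_i$ of decision nodes is partitioned into information sets $\boldsymbol H_i$, with available actions constant on information sets and perfect recall; $\mathcal X:Z\to X$ the outcome function. A strategy $s_i$ chooses an available action at each information set of $i$; $S_i$ is the set of strategies and for $M\subseteq N$, $s_M$ is a profile of strategies of the agents in $M$ ($s_{-i}$ for $M=N\setminus\{i\}$). A complete profile $s$ determines a terminal history $z(s)$ and $\mathcal X(s)=\mathcal X(z(s))$. Gradual mechanisms. A GM implementing $f$ is such a game form in which (1) actions of $i$ are nonempty subsets of $\Theta_i$; (2) at every $h\in H_i$ the available actions of $i$ are pairwise disjoint with union $\Theta_i(h)$,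 where for any history $h$, $\Theta_i(h)$ is the last action of $i$ in $h$ ($\Theta_i$ if $i$ has not acted); (3) $\mathcal X(z)=f(\theta)$ for all $z\in Z$, $\theta\in\Theta(z)=\prod_i\Theta_i(z)$. The sets $\Theta(z)$, $z\in Z$, partition $\Theta$. Consistency. For $M\subsetneq N$ and $s_M$, a history $h$ is consistent with $s_M$ if $h\preceq z(s_M,s_{N\setminus M})$ for some $s_{N\setminus M}$; a type profile $\theta$ is consistent with $s_M$ if the unique $z\in Z$ with $\theta\in\Theta(z)$ is consistent with $s_M$. Incentive compatibility. A strategy $s_i$ is unconditional for type $\theta_i$ if $\theta_i\in s_i(h)$ for every $h\in H_i$ with $\theta_i\in\Theta_i(h)$; denote such a strategy $s_{\theta_i}$. The GM is incentive compatible if $\mathcal X(s_{\theta_i},s_{-i})\,R(\theta_i)\,\mathcal X(s_i,s_{-i})$ for all $i$, $\theta_i$, unconditional $s_{\theta_i}$ for $\theta_i$, $s_i\in S_i$, $s_{-i}\in S_{-i}$. *)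

(* Defs.v *)
From mathcomp Require Import all_boot.
Set Implicit Arguments.
Unset Strict Implicit.
Unset Printing Implicit Defensive.

Section GM.
Variables (N : finType) (Theta : N -> finType) (X : finType).

(* an action profile: agent j's action (a nonempty subset of Theta j) if j
   moves, None if j does not move at that node *)
Definition Prof := {dffun forall j : N, option {set Theta j}}.
Definition history := seq Prof.

(* Theta_j(h): the last action of j in h, or all of Theta_j *)
Definition lastAct (j : N) (h : history) : {set Theta j} :=
  foldl (fun acc (a : Prof) => if a j is Some x then x else acc) setT h.

Record gameForm := GameForm {
  Hbar   : seq history;                                  (* finite tree *)
  movers : history -> {set N};
  acts   : forall j : N, history -> {set {set Theta j}};
  iset   : forall j : N, history -> nat;                 (* label of j's information set *)
  outc   : history -> X                                  (* outcome function on Z *)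
}.

Variable G : gameForm.

Definition inTree (h : history) := h \in Hbar G.
Definition nonterminal (h : history) := [exists a : Prof, rcons h a \in Hbar G].
Definition terminal (h : history) := inTree h /\ ~~ nonterminal h.
Definition decnode (j : N) (h : history) := [/\ inTree h, nonterminal h & j \in movers G h].

Definition legalProf (h : history) (a : Prof) :=
  forall j : N, (j \in movers G h -> exists2 x, a j = Some x & x \in acts G j h)
             /\ (j \notin movers G h -> a j = None).

Fixpoint expAux (j : N) (pre h : history) : seq (nat * option {set Theta j}) :=
  match h with
  | [::] => [::]
  | a :: t => (if j \in movers G pre then [:: (iset G j pre, a j)] else [::])
              ++ expAux j (rcons pre a) t
  end.
Definition experience (j : N) (h : history) := expAux j [::] h.

(* information sets: available actions constant on them, perfect recall *)
Definition infoSetsOK :=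
  (forall j h h', decnode j h -> decnode j h' -> iset G j h = iset G j h' ->
         acts G j h = acts G j h') /\
  (forall j h h', decnode j h -> decnode j h' -> iset G j h = iset G j h' ->
         experience j h = experience j h').

Definition is_gameForm :=
  [/\
      inTree [::],
      (forall h a, inTree (rcons h a) -> inTree h),
      (forall h, inTree h -> nonterminal h ->
         [/\ movers G h != set0,
             (forall j, j \in movers G h -> acts G j h != set0) &
             (forall a, inTree (rcons h a) <-> legalProf h a)]),
      movers G [::] = setT &
      infoSetsOK].


Definition is_GM (f : (forall j, Theta j) -> X) :=
  [/\ is_gameForm,
      (forall j h, decnode j h ->
         [/\ set0 \notin acts G j h,
             (forall A B, A \in acts G j h -> B \in acts G j h -> A != B ->
                [disjoint A & B]) &
             \bigcup_(A in acts G j h) A = lastAct j h]) &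
      (forall z (th : forall j, Theta j), terminal z ->
         (forall j, th j \in lastAct j z) -> outc G z = f th)].

(* strategies: a choice of action for every information set (label) *)
Definition strategy (j : N) := nat -> {set Theta j}.
Definition stratProfile := forall j : N, strategy j.

Definition validStrat (j : N) (s : strategy j) :=
  forall h, decnode j h -> s (iset G j h) \in acts G j h.

Definition unconditional (j : N) (thj : Theta j) (s : strategy j) :=
  validStrat s /\
  (forall h, decnode j h -> thj \in lastAct j h -> thj \in s (iset G j h)).

Definition profAt (s : stratProfile) (h : history) : Prof :=
  [ffun j => if j \in movers G h then Some (s j (iset G j h)) else None].

Definition plays (s : stratProfile) (z : history) :=
  terminal z /\ (forall h a, prefix (rcons h a) z -> a = profAt s h).

Definition upd (s : stratProfile) (i : N) (si : strategy i) : stratProfile :=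
  dfwith s si.

Definition validOthers (i : N) (s : stratProfile) :=
  forall j, j != i -> validStrat (s j).

Definition incentive_compatible
    (R : forall j : N, Theta j -> rel X) :=
  forall (i : N) (thi : Theta i) (sth si : strategy i) (s : stratProfile),
    unconditional thi sth -> validStrat si -> validOthers i s ->
    forall z1 z2, plays (upd s sth) z1 -> plays (upd s si) z2 ->
    R i thi (outc G z1) (outc G z2).

(* type profile th is consistent with s_{-i} (the components of s other
   than i; the i-th component of s is ignored) *)
Definition consistent (i : N) (s : stratProfile) (th : forall j, Theta j) :=
  exists z, [/\ terminal z, (forall j, th j \in lastAct j z) &
    exists2 si : strategy i, validStrat si &
      exists2 z', plays (upd s si) z' & prefix z z'].

End GM.

Definition is_preference (X : finType) (R : rel X) :=
  (forall x y, R x y || R y x) /\ (forall x y z, R x y -> R y z -> R x z).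

(* Main.v *)
Require Import Defs.
From mathcomp Require Import all_boot.
Set Implicit Arguments.
Unset Strict Implicit.
Unset Printing Implicit Defensive.

Section L.
Variables (N : finType) (Theta : N -> finType) (X : finType).
Variable G : gameForm Theta X.

Lemma prefix_rconsP (p z : history Theta) x :
  prefix p (rcons z x) -> p = rcons z x \/ prefix p z.
Proof.
move/prefixP=> [s]; elim/last_ind: s => [|s y _].
  by rewrite cats0 => ->; left.
rewrite -rcons_cat => /rcons_inj [-> _]; right; exact: prefix_prefix.
Qed.

Lemma lastAct_rcons j (h : history Theta) (a : Prof Theta) :
  lastAct j (rcons h a) = if a j is Some x then x else lastAct j h.
Proof. by rewrite /lastAct foldl_rcons. Qed.

Hypothesis gf : is_gameForm G.

Lemma tree_prefix z p : inTree G z -> prefix p z -> inTree G p.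
Proof.
case: gf => _ hcl _ _ _.
elim/last_ind: z => [|z x IH] hz.
  by rewrite prefixs0 => /eqP->.
case/prefix_rconsP=> [->//|]; apply: IH; exact: hcl hz.
Qed.

Lemma tree_step h a : inTree G (rcons h a) ->
  [/\ inTree G h, nonterminal G h & legalProf G h a].
Proof.
case: gf => _ hcl hnt _ _ ha.
have ih := hcl _ _ ha.
have nt : nonterminal G h by apply/existsP; exists a.
by split => //; case: (hnt h ih nt) => _ _ /(_ a) [H _]; apply: H.
Qed.

Lemma terminal_prefix z z' : terminal G z -> inTree G z' -> prefix z z' -> z = z'.
Proof.
case=> _ nt hz' /prefixP [s E]; subst z'; case: s hz' => [|y s]; first by rewrite cats0.
move=> hz'; exfalso; move/negP: nt; apply; apply/existsP; exists y.
apply: (tree_prefix hz'); rewrite -cat_rcons; exact: prefix_prefix.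
Qed.

Lemma plays_step s z h a : plays G s z -> prefix (rcons h a) z -> a = profAt G s h.
Proof. by case=> _; apply. Qed.

Lemma profAt_upd_i s i (si : strategy Theta i) h :
  profAt G (upd s si) h i = if i \in movers G h then Some (si (iset G i h)) else None.
Proof. by rewrite /profAt ffunE /upd dfwith_in. Qed.

End L.

Section L2.
Variables (N : finType) (Theta : N -> finType) (X : finType).
Variable G : gameForm Theta X.
Variable f : (forall j, Theta j) -> X.
Hypothesis gm : is_GM G f.

Let gf : is_gameForm G. Proof. by case: gm. Qed.

Lemma gm_acts j h : decnode G j h ->
  [/\ set0 \notin acts G j h,
      (forall A B, A \in acts G j h -> B \in acts G j h -> A != B -> [disjoint A & B]) &
      \bigcup_(A in acts G j h) A = lastAct j h].
Proof. by case: gm => _ H _; apply: H. Qed.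

Lemma step_sub j h a : inTree G (rcons h a) -> lastAct j (rcons h a) \subset lastAct j h.
Proof.
case/(tree_step gf) => ih nt lp; have [H1 H2] := lp j.
rewrite lastAct_rcons; case: (boolP (j \in movers G h)) => jm.
  have [x -> xin] := H1 jm.
  have [_ _ U] := gm_acts (And3 ih nt jm).
  by rewrite -U; apply: bigcup_sup.
by rewrite (H2 jm).
Qed.

Lemma prefix_sub j z p : inTree G z -> prefix p z -> lastAct j z \subset lastAct j p.
Proof.
elim/last_ind: z => [|z x IH] hz.
  by rewrite prefixs0 => /eqP->.
case/prefix_rconsP=> [->//|pz].
apply: (subset_trans (step_sub j hz)); apply: IH pz.
by case: (tree_step gf hz).
Qed.

Lemma nonempty_last j z : inTree G z -> z != [::] -> lastAct j z != set0.
Proof.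
elim/last_ind: z => [//|z x IH] hz _.
case/(tree_step gf): (hz) => ih nt lp; have [H1 H2] := lp j.
rewrite lastAct_rcons; case: (boolP (j \in movers G z)) => jm.
  have [y -> yin] := H1 jm.
  have [n0 _ _] := gm_acts (And3 ih nt jm).
  by apply: contraNneq n0 => <-.
rewrite (H2 jm); apply: IH => //; apply: contraNneq jm => ->.
by case: gf => _ _ _ -> _; rewrite inE.
Qed.

Lemma uncond_path i (thi : Theta i) sth (s : stratProfile Theta) z :
  unconditional G thi sth -> plays G (upd s sth) z ->
  forall p, prefix p z -> thi \in lastAct i p.
Proof.
move=> [_ U] pl p; elim/last_ind: p => [|p a IH] pz.
  by rewrite /lastAct /= inE.
have pz' : prefix p z by apply: prefix_trans pz; exact: prefix_rcons.
have hp : inTree G (rcons p a) by apply: (tree_prefix gf _ pz); case: pl => [[]].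
rewrite lastAct_rcons (plays_step pl pz) profAt_upd_i.
case: ifP => jm; last exact: IH.
case/(tree_step gf): hp => ih nt _.
by apply: U; [split | exact: IH].
Qed.

End L2.

Theorem proposition4 (N : finType) (Theta : N -> finType) (X : finType)
    (R : forall j : N, Theta j -> rel X)
    (f : (forall j, Theta j) -> X) (G : gameForm Theta X) :
  (forall j (thj : Theta j), is_preference (R j thj)) ->
  is_GM G f ->
  incentive_compatible G R <->
  (forall (i : N) (s : stratProfile Theta), validOthers G i s ->
     forall th1 th2 : forall j, Theta j,
       consistent G i s th1 -> consistent G i s th2 ->
       R i (th1 i) (f th1) (f th2)).
Proof.
move=> hpref gm.
have gf : is_gameForm G by case: gm.
have outcE : forall z th, terminal G z -> (forall j, th j \in lastAct j z) -> outc G z = f th.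
  by case: gm.
split; last first.
  move=> C i thi sth si s un vsi vo z1 z2 p1 p2.
  have t1 := p1.1; have t2 := p2.1.
  case: (eqVneq z1 [::]) => [z1nil | z1n].
    have ez : z1 = z2.
      by apply: (terminal_prefix gf t1 t2.1); rewrite z1nil prefix0s.
    rewrite ez; have [tot _] := hpref i thi.
    by case/orP: (tot (outc G z2) (outc G z2)).
  have z2n : z2 != [::].
    apply: contraNneq z1n => z2nil.
    idtac; have := terminal_prefix gf t2 t1.1.
    by rewrite z2nil prefix0s => /(_ isT) <-.
  have ne1 : forall j, exists x, x \in lastAct j z1.
    by move=> j; apply/set0Pn; apply: (nonempty_last gm) => //; case: t1.
  have ne2 : forall j, exists x, x \in lastAct j z2.
    by move=> j; apply/set0Pn; apply: (nonempty_last gm) => //; case: t2.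
  pose th0 := fun j => sval (sigW (ne1 j)).
  pose th1 := dfwith th0 thi.
  pose th2 := fun j => sval (sigW (ne2 j)).
  have m1 : forall j, th1 j \in lastAct j z1.
    move=> j; rewrite /th1; case: dfwithP => [|k _].
      by apply: (uncond_path gm un p1); apply: prefix_refl.
    exact: svalP (sigW (ne1 k)).
  have m2 : forall j, th2 j \in lastAct j z2.
    by move=> j; exact: svalP (sigW (ne2 j)).
  have c1 : consistent G i s th1.
    exists z1; split => //; exists sth; first by case: un.
    by exists z1 => //; apply: prefix_refl.
  have c2 : consistent G i s th2.
    exists z2; split => //; exists si => //.
    by exists z2 => //; apply: prefix_refl.
  have := C i s vo th1 th2 c1 c2.
  by rewrite /th1 dfwith_in -(outcE _ _ t1 m1) -(outcE _ _ t2 m2).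
move=> IC i s vo th1 th2 [z1 [t1 m1 [si1 v1 [z1' p1 pr1]]]]
  [z2 [t2 m2 [si2 v2 [z2' p2 pr2]]]].
have e1 := terminal_prefix gf t1 p1.1.1 pr1; subst z1'.
have e2 := terminal_prefix gf t2 p2.1.1 pr2; subst z2'.
rewrite -(outcE _ _ t1 m1) -(outcE _ _ t2 m2).
have [_ _ hnt _ [infoA _]] := gf.
have iz1 : inTree G z1 by case: t1.
have K : forall h0 a, prefix (rcons h0 a) z1 -> i \in movers G h0 ->
    th1 i \in si1 (iset G i h0).
  move=> h0 a pz im.
  have := prefix_sub gm i iz1 pz.
  rewrite lastAct_rcons (plays_step p1 pz) profAt_upd_i im => /subsetP; apply.
  exact: m1.
pose pathN n := has (fun h0 => [exists a : Prof Theta, prefix (rcons h0 a) z1]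
   && (i \in movers G h0) && (iset G i h0 == n)) (Hbar G).
pose dn n := [seq h <- Hbar G | [exists a : Prof Theta, rcons h a \in Hbar G]
   && (i \in movers G h) && (iset G i h == n)].
pose ch n : {set Theta i} := let A := acts G i (head [::] (dn n)) in
   if [pick B in A | th1 i \in B] is Some B then B else
   if [pick B in A] is Some B then B else set0.
pose sth n := if pathN n then si1 n else ch n.
have KP : forall n, pathN n -> exists2 h0, decnode G i h0 & iset G i h0 = n /\ th1 i \in si1 n.
  move=> n /hasP [h0 hin /andP [/andP [/existsP [a pz] im] /eqP en]].
  exists h0; first by split => //; apply/existsP; exists a; exact: (tree_prefix gf iz1 pz).
  by split => //; rewrite -en; exact: K pz im.
have KD : forall h, decnode G i h -> exists2 h', decnode G i h' &
    head [::] (dn (iset G i h)) = h' /\ acts G i h' = acts G i h.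
  move=> h dh; have hd : h \in dn (iset G i h).
    case: dh => ih nt im; rewrite mem_filter im eqxx !andbT; apply/andP; split; [exact: nt | exact: ih].
  case E: (dn (iset G i h)) hd => [//|h' t] _.
  have : h' \in dn (iset G i h) by rewrite E mem_head.
  rewrite mem_filter => /andP [/andP [/andP [nt' im'] /eqP e'] ih'].
  have dh' : decnode G i h' by split.
  by exists h' => //; split => //; apply: infoA.
have vs : validStrat G sth.
  move=> h dh; rewrite /sth; case: ifP => pn.
    have [h0 dh0 [e0 _]] := KP _ pn.
    by rewrite -(infoA _ _ _ dh0 dh e0) -e0; apply: v1.
  have [h' dh' [eh ea]] := KD h dh.
  rewrite /ch eh ea.
  case: pickP => [B /andP [] //|_].
  case: pickP => [B //|none].
  case: dh => ih nt im; have [_ ne _] := hnt h ih nt.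
  by case/set0Pn: (ne i im) => x; rewrite none.
have un : unconditional G (th1 i) sth.
  split => // h dh thin; rewrite /sth; case: ifP => pn.
    by have [h0 _ [_ ->]] := KP _ pn.
  have [h' dh' [eh ea]] := KD h dh.
  rewrite /ch eh ea.
  case: pickP => [B /andP [] //|none].
  have [_ _ U] := gm_acts gm dh.
  move: thin; rewrite -U => /bigcupP [B Bin thB].
  by have := none B; rewrite Bin thB.
have pl : plays G (upd s sth) z1.
  split => // h a pz; rewrite (plays_step p1 pz).
  apply/ffunP => j; rewrite !ffunE; case: ifP => // jm; congr Some.
  rewrite /upd; case: (eqVneq i j) => [ij|ij]; last by rewrite !dfwith_out.
  subst j; rewrite !dfwith_in /sth.
  have -> : pathN (iset G i h) = true.
    apply/hasP; exists h.
      by case: (tree_step gf (tree_prefix gf iz1 pz)).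
    by rewrite jm eqxx !andbT; apply/existsP; exists a.
  by [].
exact: (IC i (th1 i) sth si2 s un v2 vo z1 z2 pl p2).
Qed.
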